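(* Let $n\ge2$, $c\ge1$, $d\ge r\ge1$ and $\epsilon>0$, and let $B=2\epsilon^{-2}\frac{d}{cr}\log n$. There is a random set $F$ (a probability distribution over sets) of $d/B$ functions $f:\{0,1\}^d\to\{0,1\}^B$ such that for every $x,y\in\{0,1\}^d$: (1) with probability 1 there is at least one $f\in F$ with $\operatorname{dist}(f(x),f(y))\le\operatorname{dist}(x,y)\,B/d$; (2) if $\operatorname{dist}(x,y)\ge cr$, then for every $f\in F$, with probability at least $1-1/n$, $\operatorname{dist}(f(x),f(y))\ge(1-\epsilon)cr\,B/d$.
   Context: $\operatorname{dist}$ denotes Hamming distance (number of differing coordinates) on binary vectors of the appropriate length. *)

(* Defs.v *)
From HB Require Import structures.
From mathcomp Require Import all_boot all_order ssralg ssrnum finalg.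
From mathcomp Require Import reals exp.
Set Implicit Arguments. Unset Strict Implicit. Unset Printing Implicit Defensive.
Import Order.TTheory GRing.Theory Num.Theory.
Local Open Scope ring_scope.

Definition bvec (m : nat) := {ffun 'I_m -> bool}.

Definition hdist (m : nat) (u v : bvec m) : nat := #|[set i | u i != v i]|.

(* a family of k functions {0,1}^d -> {0,1}^B (indexed, i.e. a multiset) *)
Definition hfamily (d B k : nat) := {ffun 'I_k -> {ffun bvec d -> bvec B}}.

Definition is_distr (R : realType) (T : finType) (P : {ffun T -> R}) : Prop :=
  (forall t, 0 <= P t) /\ \sum_(t : T) P t = 1.

Definition prob (R : realType) (T : finType) (P : {ffun T -> R}) (A : pred T) : R :=
  \sum_(t : T | A t) P t.

(* Main.v *)
Require Import Defs.
From HB Require Import structures.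
From mathcomp Require Import all_classical all_reals all_analysis.
From mathcomp Require Import all_boot all_order ssralg ssrnum finalg.
From mathcomp Require Import reals exp.
From mathcomp Require Import fingroup perm.
From mathcomp Require Import ring lra zify.
Import Order.TTheory GRing.Theory Num.Theory.
Import numFieldNormedType.Exports.
Set Implicit Arguments. Unset Strict Implicit. Unset Printing Implicit Defensive.
Section Comb.
Variable T : finType.

Definition cnt (E S : {set T}) : nat :=
  \sum_(s : {perm T}) [forall t in S, s t \in E].

Lemma card_permT : #|{perm T}| = (#|T|)`!.
Proof.
rewrite (eq_card (B := perm_on [set: T])).
  by rewrite card_perm /= cardsE.
move=> p; rewrite inE unfold_in /perm_on /=.
by apply/esym/fintype.subsetP => i _; rewrite inE.
Qed.

Lemma cnt0 E : cnt E set0 = (#|T|)`!.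
Proof.
rewrite /cnt (eq_bigr (fun _ => 1%N)) ?sum1_card ?card_permT // => s _.
by have -> : [forall t in set0, s t \in E] by apply/forall_inP => t; rewrite in_set0.
Qed.

Lemma tperm_mem (S : {set T}) t t0 x :
  t \notin S -> t0 \notin S -> x \in t |: S -> tperm t t0 x \in t0 |: S.
Proof.
move=> tS t0S; rewrite !inE; case: tpermP => [->|->|xt xt0].
- by move=> _; rewrite eqxx.
- by rewrite (negPf t0S) orbF => /eqP->; rewrite eqxx.
- by case/orP => [/eqP//|->]; rewrite orbT.
Qed.

Lemma cnt_sym (E S : {set T}) t t0 : t \notin S -> t0 \notin S ->
  cnt E (t |: S) = cnt E (t0 |: S).
Proof.
move=> tS t0S; rewrite /cnt (reindex_inj (mulgI (tperm t t0))).
apply: eq_bigr => s _; congr nat_of_bool.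
apply/forall_inP/forall_inP => H x xS.
- have := H (tperm t t0 x); rewrite permM tpermK; apply.
  by rewrite tpermC; apply: tperm_mem.
- by rewrite permM; apply: H; apply: tperm_mem.
Qed.

Lemma cnt_step (E S : {set T}) t0 : t0 \notin S ->
  ((#|T| - #|S|) * cnt E (t0 |: S) = (#|E| - #|S|) * cnt E S)%N.
Proof.
move=> t0S.
have H1 : (\sum_(t in ~: S) cnt E (t |: S) = (#|T| - #|S|) * cnt E (t0 |: S))%N.
  rewrite (eq_bigr (fun _ => cnt E (t0 |: S))) => [|t]; last first.
    by rewrite inE => tS; apply: cnt_sym.
  rewrite sum_nat_const; congr (_ * _)%N.
  by have := cardsC S; lia.
rewrite -H1 /cnt exchange_big /= big_distrr /=; apply: eq_bigr => s _.
case: (boolP [forall x in S, s x \in E]) => HS; last first.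
  rewrite muln0; apply: big1 => t _.
  case: (boolP [forall x in t |: S, s x \in E]) => // /forall_inP H.
  case/negP: HS; apply/forall_inP => x xS; apply: H.
  by rewrite inE xS orbT.
rewrite muln1.
have -> : (\sum_(t in ~: S) [forall x in t |: S, s x \in E] =
          \sum_(t in ~: S) (s t \in E))%N.
  apply: eq_bigr => t _; congr nat_of_bool.
  apply/forall_inP/idP => [H|stE x]; first by apply: H; rewrite !inE eqxx.
  by rewrite !inE => /orP[/eqP->//|]; move/forall_inP: HS; apply.
rewrite -big_mkcondr /= sum1dep_card.
have -> : #|[set x in ~: S | s x \in E]| = #|(s @^-1: E) :\: S|.
  by apply: eq_card => t; rewrite !inE andbC.
rewrite cardsD card_preimset; last exact: perm_inj.
have /setIidPr -> // : S \subset s @^-1: E.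
by apply/fintype.subsetP => x xS; rewrite inE; move/forall_inP: HS; apply.
Qed.

Lemma cnt_bound (E S : {set T}) : (cnt E S * #|T| ^ #|S| <= (#|T|)`! * #|E| ^ #|S|)%N.
Proof.
move: {2}#|S| (erefl #|S|) => n; elim: n S => [|m IH] S hS.
  by move/eqP: hS; rewrite cards_eq0 => /eqP->; rewrite cards0 cnt0 !expn0.
have : (0 < #|S|)%N by rewrite hS.
case/card_gt0P => t0 t0S.
set S' := S :\ t0.
have hS' : #|S'| = m by move: (cardsD1 t0 S); rewrite t0S hS add1n => -[->].
have t0S' : t0 \notin S' by rewrite !inE eqxx.
have defS : S = t0 |: S' by rewrite setD1K.
have step := cnt_step E t0S'; rewrite -defS hS' in step.
have IH' := IH S' hS'; rewrite hS' in IH'.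
have mN : (m < #|T|)%N.
  have := max_card S; rewrite hS; lia.
have eN : (#|E| <= #|T|)%N by apply: max_card.
rewrite hS.
set A := cnt E S in step *; set A' := cnt E S' in step IH' *.
set N := #|T| in step mN eN IH' *; set e := #|E| in step eN IH' *.
have pos : (0 < N - m)%N by lia.
rewrite -(leq_pmul2r pos).
have key : ((e - m) * N <= e * (N - m))%N.
  case: (leqP e m) => em; first by rewrite (eqP (_ : e - m == 0)%N) ?mul0n //; lia.
  nia.
rewrite !expnSr.
have -> : (A * (N ^ m * N) * (N - m) = (e - m) * N * (A' * N ^ m))%N.
  by rewrite -[X in X = _]mulnC !mulnA step; ring.
apply: (leq_trans (leq_mul (leqnn _) IH')).
rewrite [X in (_ <= X)%N](_ : _ = (e * (N - m)) * (N`! * e ^ m))%N; last by ring.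
by apply: leq_mul.
Qed.

End Comb.

Section MGF.
Local Open Scope ring_scope.
Variables (R : realType) (T : finType).

Lemma prod_ind (J : {set T}) (P : pred T) (v : R) :
  \prod_(t in J) (if P t then v else 0) =
  if [forall t in J, P t] then v ^+ #|J| else 0.
Proof.
case: ifP => [/forall_inP H|].
  by rewrite -prodr_const; apply: eq_bigr => t tJ; rewrite H.
move/negbT/forall_inPn => [t tJ nPt].
by rewrite (bigD1 t) //= (negPf nPt) mul0r.
Qed.

Lemma mgf (Q E : {set T}) (v : R) : 0 <= v -> (0 < #|T|)%N ->
  \sum_(s : {perm T}) (1 + v) ^+ #|[set t in Q | s t \in E]| <=
  (#|T|)`!%:R * (1 + v * #|E|%:R / #|T|%:R) ^+ #|Q|.
Proof.
move=> v0 N0.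
set N := #|T|; set e := #|E|.
pose x (s : {perm T}) t : R := if (t \in Q) && (s t \in E) then v else 0.
pose y t : R := if t \in Q then v * e%:R / N%:R else 0.
have step1 (s : {perm T}) : (1 + v) ^+ #|[set t in Q | s t \in E]| =
    \sum_(J : {set T}) \prod_(t in J) x s t.
  have -> : (1 + v) ^+ #|[set t in Q | s t \in E]| = \prod_t (x s t + 1).
    rewrite (bigID (fun t => (t \in Q) && (s t \in E))) /=.
    rewrite [X in _ * X]big1 ?mulr1; last by move=> t /negPf H; rewrite /x /= H add0r.
    rewrite (eq_bigr (fun _ => 1 + v)); last by move=> t H; rewrite /x /= H addrC.
    by rewrite prodr_const; congr (_ ^+ _); apply: eq_card => t; rewrite !inE.
  rewrite bigA_distr; apply: eq_bigr => J _.
  by rewrite [RHS]big_mkcond.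
rewrite (eq_bigr _ (fun s _ => step1 s)).
rewrite exchange_big /=.
have step2 : \sum_(J : {set T}) \prod_(t in J) (y t) = (1 + v * e%:R / N%:R) ^+ #|Q|.
  transitivity (\prod_t (y t + 1)).
    by rewrite bigA_distr; apply: eq_bigr => J _; rewrite big_mkcond.
  rewrite (bigID (mem Q)) /= [X in _ * X]big1 ?mulr1; last first.
    by move=> t /negPf H; rewrite /y /= H add0r.
  rewrite (eq_bigr (fun _ => 1 + v * e%:R / N%:R)); last by move=> t H; rewrite /y /= H addrC.
  by rewrite prodr_const; congr (_ ^+ _); apply: eq_card => t; rewrite !inE.
rewrite -step2 mulr_sumr; apply: ler_sum => J _.
rewrite /y /x.
case: (boolP (J \subset Q)) => JQ; last first.
  move/fintype.subsetPn: JQ => [t tJ tQ].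
  rewrite (bigD1 t) //= (negPf tQ) mul0r mulr0.
  by rewrite big1 // => s _; rewrite (bigD1 t) //= (negPf tQ) mul0r.
have -> : \prod_(t in J) (if t \in Q then v * e%:R / N%:R else 0) = (v * e%:R / N%:R) ^+ #|J|.
  by rewrite prod_ind; case: forall_inP => // H; case: H => t; move/fintype.subsetP: JQ; apply.
under eq_bigr do rewrite prod_ind.
have -> : \sum_(s : {perm T}) (if [forall t in J, (t \in Q) && (s t \in E)] then v ^+ #|J| else 0)
   = (cnt E J)%:R * v ^+ #|J|.
  rewrite /cnt natr_sum mulr_suml; apply: eq_bigr => s _.
  have -> : [forall t in J, (t \in Q) && (s t \in E)] = [forall t in J, s t \in E].
    apply/forall_inP/forall_inP => H t tJ; first by case/andP: (H t tJ).
    by rewrite H // andbT; move/fintype.subsetP: JQ; apply.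
  by case: ifP; rewrite ?mul1r ?mul0r.
have Hb := cnt_bound E J.
have NR : 0 < N%:R :> R by rewrite ltr0n.
have -> : N`!%:R * (v * e%:R / N%:R) ^+ #|J| = v ^+ #|J| * (N`!%:R * e%:R ^+ #|J| / N%:R ^+ #|J|).
  by rewrite !exprMn exprVn; ring.
rewrite mulrC ler_wpM2l ?exprn_ge0 // ler_pdivlMr ?exprn_gt0 //.
by rewrite -!natrX -!natrM ler_nat.
Qed.

Lemma tail (Q D : {set T}) (lam tau : R) : 0 <= lam -> (0 < #|T|)%N ->
  (\sum_(s : {perm T}) (nat_of_bool (#|[set t in Q | s t \in D]|%:R < tau))%:R : R)
     * expR (lam * (#|Q|%:R - tau))
  <= (#|T|)`!%:R * (1 + (expR lam - 1) * #|~: D|%:R / #|T|%:R) ^+ #|Q|.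
Proof.
move=> l0 N0.
have v0 : 0 <= expR lam - 1 by have := expR_ge1Dx lam; lra.
apply: le_trans (mgf Q (~: D) v0 N0).
rewrite mulr_suml; apply: ler_sum => s _.
have -> : 1 + (expR lam - 1) = expR lam by ring.
case: (boolP (#|[set t in Q | s t \in D]|%:R < tau)) => H; last by rewrite mul0r exprn_ge0 ?expR_ge0.
rewrite mul1r -expRM_natl ler_expR mulrC ler_wpM2r //.
have HC : (#|[set t in Q | s t \in D]| + #|[set t in Q | s t \in ~: D]| = #|Q|)%N.
  rewrite -(cardsID (s @^-1: D) Q); congr (_ + _)%N; apply: eq_card => t; rewrite !inE //.
  by rewrite andbC.
move: H; rewrite -HC natrD; lra.
Qed.

End MGF.

Section Reals.
Local Open Scope classical_set_scope.
Local Open Scope ring_scope.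
Lemma expR_ge2 (R : realType) (x : R) : 0 <= x -> 1 + x + x ^+ 2 / 2 <= expR x.
Proof.
rewrite le_eqVlt => /orP[/eqP<-|x0].
  by rewrite expR0 expr0n /= mul0r !addr0.
pose f := fun y : R => expR y - y - y ^+ 2 / 2.
have df : forall y : R, is_derive y 1 f (expR y - 1 - y).
  move=> y; rewrite /f.
  apply: is_derive_eq.
  rewrite !scaler0 add0r /GRing.scale /= mulr1; field.
  by [].
have [|c c0x h2] := @MVT R f (fun y => expR y - 1 - y) 0 x x0 (fun y _ => df y).
  apply: derivable_within_continuous => y _.
  exact: ex_derive.
have := expR_ge1Dx c.
rewrite /f expR0 expr0n /= mul0r !subr0 in h2 => h1.
have : 0 <= (expR c - 1 - c) * x by apply: mulr_ge0; lra.
rewrite -h2; lra.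
Qed.

Lemma expRN_le (R : realType) (x : R) : 0 <= x -> expR (- x) <= 1 - x + x ^+ 2 / 2.
Proof.
move=> x0; have h := @expR_ge2 R x x0.
have A0 : 0 < 1 + x + x ^+ 2 / 2 by have := sqr_ge0 x; lra.
rewrite expRN.
apply: (le_trans (y := (1 + x + x ^+ 2 / 2)^-1)).
  by rewrite lef_pV2 ?posrE ?expR_gt0.
rewrite -(ler_pM2l A0) mulfV ?gt_eqF //.
have : 0 <= x ^+ 4 by rewrite exprn_ge0.
have -> : x ^+ 4 = x ^+ 2 * x ^+ 2 by rewrite -exprD.
move=> h4; rewrite -subr_ge0; set u := x ^+ 2 in h4 *.
have -> : u = x * x by rewrite /u expr2.
rewrite /u in h4; rewrite expr2 in h4.
nra.
Qed.

Lemma final_real (R : realType) (n d B h : nat) (c r eps cnt F : R) :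
  (2 <= n)%N -> 0 < eps -> eps < 1 -> (0 < d)%N -> 1 <= c -> 1 <= r ->
  c * r <= h%:R -> (h <= d)%N ->
  B%:R = 2 / eps ^+ 2 * (d%:R / (c * r)) * ln (n%:R : R) ->
  cnt * expR (eps * (B%:R - (1 - eps) * c * r * B%:R / d%:R)) <=
     F * (1 + (expR eps - 1) * (d%:R - h%:R) / d%:R) ^+ B ->
  0 <= F ->
  cnt <= F / n%:R.
Proof.
move=> n2 e0 e1 d0 c1 r1 crh hd hB Hc F0.
set a := expR (- eps).
have a0 : 0 < a by apply: expR_gt0.
have ae : a * expR eps = 1 by rewrite /a expRN mulVf // gt_eqF // expR_gt0.
have aleq := @expRN_le R eps (ltW e0); rewrite -/a in aleq.
have dR : 0 < d%:R :> R by rewrite ltr0n.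
have hdR : h%:R <= d%:R :> R by rewrite ler_nat.
set M := c * r * B%:R / d%:R.
have hM : eps ^+ 2 * M / 2 = ln n%:R.
  rewrite /M hB; field.
  by rewrite !gt_eqF //; lra.
set Z := 1 - (1 - a) * h%:R / d%:R.
have Z0 : 0 <= Z.
  rewrite /Z subr_ge0 ler_pdivrMr // mul1r.
  have : a <= 1 by rewrite /a expR_le1; lra.
  move=> a1; have : 0 <= h%:R :> R by [].
  nra.
have ZW : Z = a * (1 + (expR eps - 1) * (d%:R - h%:R) / d%:R).
  rewrite /Z /a expRN; field; by rewrite !gt_eqF ?expR_gt0.
have tauE : (1 - eps) * c * r * B%:R / d%:R = (1 - eps) * M by rewrite /M; ring.
rewrite tauE in Hc.
set W := 1 + (expR eps - 1) * (d%:R - h%:R) / d%:R in Hc ZW.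
pose K : R := h%:R * B%:R / d%:R.
have cnt1 : cnt <= F * W ^+ B * expR (- (eps * (B%:R - (1 - eps) * M))).
  by rewrite expRN ler_pdivlMr ?expR_gt0.
have e1' : expR (- (eps * (B%:R - (1 - eps) * M))) = a ^+ B * expR (eps * ((1 - eps) * M)).
  rewrite -expRM_natl -expRD; congr expR; ring.
have cnt2 : cnt <= F * (Z ^+ B * expR (eps * ((1 - eps) * M))).
  by apply: (le_trans cnt1); rewrite e1' ZW exprMn le_eqVlt; apply/orP; left; apply/eqP; ring.
have ZB : Z ^+ B <= expR (- ((1 - a) * K)).
  have -> : - ((1 - a) * K) = B%:R * (- ((1 - a) * h%:R / d%:R)) by rewrite /K; field; rewrite gt_eqF.
  rewrite expRM_natl lerXn2r // ?nnegrE ?expR_ge0 //.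
  by rewrite /Z; have := expR_ge1Dx (- ((1 - a) * h%:R / d%:R)); lra.
have MK : M <= K.
  rewrite /M /K; apply: ler_wpM2r; first by rewrite invr_ge0 ler0n.
  by apply: ler_wpM2r.
have M0 : 0 <= M.
  by rewrite /M; apply: divr_ge0 => //; apply: mulr_ge0 => //; apply: mulr_ge0; lra.
have h1 : (eps - eps ^+ 2 / 2) * M <= (1 - a) * K.
  apply: ler_pM => //.
    by have := sqr_ge0 eps; rewrite expr2 in aleq * => ?; nra.
  lra.
have expo : eps * ((1 - eps) * M) - (1 - a) * K <= - ln n%:R.
  rewrite -hM; rewrite expr2 in h1 *; nra.
apply: (le_trans cnt2).
rewrite ler_wpM2l //.
apply: (le_trans (y := expR (- ((1 - a) * K)) * expR (eps * ((1 - eps) * M)))).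
  by rewrite ler_wpM2r ?expR_ge0.
rewrite -expRD.
have n0 : 0 < n%:R :> R by rewrite ltr0n; apply: (ltn_trans _ n2).
rewrite -(lnK n0) -expRN ler_expR; lra.
Qed.


End Reals.

Local Open Scope ring_scope.

Lemma card_setE (T : finType) (P : pred T) : #|[set t | P t]| = (\sum_t P t)%N.
Proof. by rewrite -sum1dep_card big_mkcond. Qed.

Theorem lemma4 (R : realType) (n d B k : nat) (c r eps : R) :
  (2 <= n)%N -> 1 <= c -> 1 <= r -> r <= d%:R -> 0 < eps ->
  B%:R = 2 / eps ^+ 2 * (d%:R / (c * r)) * ln (n%:R : R) ->
  (k * B)%N = d ->
  exists P : {ffun hfamily d B k -> R}, is_distr P /\
    forall x y : bvec d,
      prob P (fun F => [exists i : 'I_k,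
                 ((hdist (F i x) (F i y))%:R : R)
                   <= (hdist x y)%:R * B%:R / d%:R]) = 1
      /\ (c * r <= (hdist x y)%:R ->
          forall i : 'I_k,
            1 - (n%:R : R)^-1 <=
            prob P (fun F => (1 - eps) * c * r * B%:R / d%:R
                               <= ((hdist (F i x) (F i y))%:R : R))).
Proof.
move=> n2 c1 r1 rd e0 hB hkB.
have d0 : (0 < d)%N by rewrite -(ltr0n R); lra.
have k0 : (0 < k)%N by move: d0; rewrite -hkB muln_gt0 => /andP[].
have B0 : (0 < B)%N by move: d0; rewrite -hkB muln_gt0 => /andP[].
have Hc : #|{: 'I_k * 'I_B}| = d by rewrite card_prod !card_ord.
pose phi (p : 'I_k * 'I_B) : 'I_d := cast_ord Hc (enum_rank p).
pose phiV (t : 'I_d) : 'I_k * 'I_B := enum_val (cast_ord (esym Hc) t).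
have phiK : cancel phi phiV by move=> p; rewrite /phi /phiV cast_ordK enum_rankK.
have phiVK : cancel phiV phi by move=> t; rewrite /phi /phiV enum_valK cast_ordKV.
have phib : {on [pred t | true], bijective phi} by exists phiV => t _; [apply: phiK | apply: phiVK].
pose Fam (s : {perm 'I_d}) : hfamily d B k :=
  [ffun i => [ffun x : bvec d => [ffun j : 'I_B => x (s (phi (i, j)))]]].
pose P : {ffun hfamily d B k -> R} :=
  [ffun F => ((d`!)%:R)^-1 * \sum_(s : {perm 'I_d}) (nat_of_bool (Fam s == F))%:R].
have fact0 : ((d`!)%:R : R) != 0 by rewrite pnatr_eq0 -lt0n fact_gt0.
have probE (A : pred (hfamily d B k)) :
  prob P A = ((d`!)%:R)^-1 * \sum_(s : {perm 'I_d}) (nat_of_bool (A (Fam s)))%:R.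
  rewrite /prob (eq_bigr (fun F => ((d`!)%:R)^-1 * \sum_(s : {perm 'I_d}) (nat_of_bool (Fam s == F))%:R)); last by move=> F _; rewrite ffunE.
  rewrite -mulr_sumr exchange_big /=; congr (_ * _); apply: eq_bigr => s _.
  case: (boolP (A (Fam s))) => HA.
    rewrite (bigD1 (Fam s)) //= eqxx big1 ?addr0 // => F /andP[_ /negPf].
    by rewrite eq_sym => ->.
  rewrite big1 // => F AF; case: eqP => // eF.
  by move: HA; rewrite eF AF.
have sum1 (A : pred (hfamily d B k)) : (forall s, A (Fam s)) -> prob P A = 1.
  move=> H; rewrite probE (eq_bigr (fun _ => 1)) => [|s _]; last by rewrite H.
  by rewrite sumr_const card_permT card_ord mulVf.
exists P; split.
  split.
    by move=> F; rewrite ffunE mulr_ge0 // ?invr_ge0 ?ler0n // sumr_ge0.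
  by have := sum1 predT (fun _ => isT); rewrite /prob.
move=> x y.
have hdF s i : hdist (Fam s i x) (Fam s i y) =
    #|[set j : 'I_B | x (s (phi (i, j))) != y (s (phi (i, j)))]|.
  by rewrite /hdist /Fam; apply: eq_card => j; rewrite !inE !ffunE.
split.
  apply: sum1 => s.
  have hsum : (\sum_(i < k) hdist (Fam s i x) (Fam s i y))%N = hdist x y.
    rewrite (eq_bigr _ (fun i _ => hdF s i)).
    rewrite (eq_bigr _ (fun i _ => card_setE _)) pair_bigA /=.
    rewrite /hdist card_setE (reindex_inj (@perm_inj _ s)) /= (reindex phi) //=.
    by apply: eq_bigr => -[i j].
  apply/existsP.
  case: (pickP (fun i => (hdist (Fam s i x) (Fam s i y))%:R <= (hdist x y)%:R * B%:R / d%:R :> R)) => [i Hi|H]; first by exists i.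
  exfalso.
  have lt i : (hdist x y < hdist (Fam s i x) (Fam s i y) * k)%N.
    move: (H i) => /= /negbT; rewrite -ltNge ltr_pdivrMr ?ltr0n // -!natrM ltr_nat => h'.
    by rewrite -(ltn_pmul2r B0) -mulnA hkB.
  have : (\sum_(i < k) (hdist x y).+1 <= \sum_(i < k) hdist (Fam s i x) (Fam s i y) * k)%N.
    by apply: leq_sum => i _; exact: lt i.
  rewrite -big_distrl /= hsum sum_nat_const card_ord.
  nia.
move=> hcr i.
set tau := (1 - eps) * c * r * B%:R / d%:R.
have M0 : 0 <= c * r * B%:R / d%:R.
  apply: divr_ge0 => //; apply: mulr_ge0 => //; apply: mulr_ge0; lra.
have n0 : 0 <= (n%:R : R)^-1 by rewrite invr_ge0 ler0n.
case: (leP 1 eps) => e1.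
  rewrite sum1 => [|s]; first lra.
  apply: (le_trans (y := 0)) => //.
  have -> : tau = (1 - eps) * (c * r * B%:R / d%:R) by rewrite /tau; ring.
  nra.
pose D : {set 'I_d} := [set u | x u != y u].
pose Q : {set 'I_d} := [set t | (phiV t).1 == i].
have Xe s : hdist (Fam s i x) (Fam s i y) = #|[set t in Q | s t \in D]|.
  rewrite hdF !card_setE (reindex phi) //=.
  rewrite (eq_bigr (fun p => nat_of_bool ((p.1 == i) && (x (s (phi (p.1, p.2))) != y (s (phi (p.1, p.2))))))); last first.
    by move=> -[i' j] _; rewrite !inE phiK.
  rewrite -(pair_bigA _ (fun i' j => nat_of_bool ((i' == i) && (x (s (phi (i', j))) != y (s (phi (i', j))))))).
  rewrite [RHS](bigD1 i) //= [X in (_ + X)%N]big1 ?addn0; last first.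
    by move=> i' /negPf ne; apply: big1 => j _; rewrite ne.
  by apply: eq_bigr => j _; rewrite eqxx.
have cardQ : #|Q| = B.
  rewrite card_setE (reindex phi) //=.
  rewrite (eq_bigr (fun p => nat_of_bool (p.1 == i))); last by move=> -[i' j] _; rewrite phiK.
  rewrite -(pair_bigA _ (fun i' (j : 'I_B) => nat_of_bool (i' == i))).
  rewrite (bigD1 i) //= [X in (_ + X)%N]big1 ?addn0; last first.
    by move=> i' /negPf ne; apply: big1 => j _; rewrite ne.
  by rewrite (eq_bigr (fun _ => 1%N)) ?sum1_card ?card_ord // => j _; rewrite eqxx.
have cardD : #|D| = hdist x y by [].
have cardCD : (#|~: D|%:R : R) = d%:R - (hdist x y)%:R.
  have h := cardsC D; rewrite card_ord cardD in h.
  by rewrite -[X in X%:R - _]h natrD; ring.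
have hd : (hdist x y <= d)%N by rewrite -cardD -[X in (_ <= X)%N](card_ord d) max_card.
have tl := @tail R _ Q D eps tau (ltW e0) (ltac:(by rewrite card_ord)).
rewrite !card_ord cardQ cardCD in tl.
set cnt := \sum_(s : {perm 'I_d}) _ in tl.
have fr := final_real n2 e0 e1 d0 c1 r1 hcr hd hB tl (ler0n _ _).
rewrite probE.
have -> : \sum_(s : {perm 'I_d}) (nat_of_bool (tau <= (hdist (Fam s i x) (Fam s i y))%:R))%:R
     = (d`!)%:R - cnt :> R.
  rewrite /cnt (_ : (d`!)%:R = \sum_(s : {perm 'I_d}) (1 : R)); last first.
    by rewrite sumr_const card_permT card_ord.
  rewrite -sumrB; apply: eq_bigr => s _.
  rewrite Xe leNgt; case: (_ < tau); rewrite /=; ring.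
rewrite mulrBr mulVf //.
have : ((d`!)%:R)^-1 * cnt <= (n%:R)^-1.
  rewrite mulrC ler_pdivrMr ?ltr0n ?fact_gt0 //.
  by rewrite mulrC.
lra.
Qed.
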